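(* Let $(N_n)_{n\in\mathbb{N}}$ be a strictly increasing sequence of natural numbers and let $f_n:\ell_1\to\mathbb{R}$ be defined as below. Then $f_n \geq 0$ for every $n \in \mathbb{N}$ and $f_n \wedge f_l = 0$ for all $n \neq l$.
   Context: Identify $c_0^*=\ell_1$ and write $x^*=(x^*_1,x^*_2,\ldots)$. For $n<m$ let $g_{nm}: \ell_1 \to [0,1]$ be any continuous function such that $g_{nm}(x^* ) = 0$ if $N_m|x_n^*| \leq |x_m^*|$, $g_{nm}(x^* ) = 1$ if $|x_m^*| \leq (N_m-1)|x_n^*|$, and $g_{nm}(x^* )=g_{nm}(x^*/\|x^*\|)$ whenever $x^* \neq 0$. Define $$f_n(x^* ) = \big(|x_n^*|-N_n\max\{|x_m^*| : m<n\}\big)^+ \cdot \prod_{m > n}g_{nm}(x^* ),$$ where $r^+=\max\{r,0\}$ and the max over the empty set is $0$. Order and lattice operations are pointwise. *)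

(* Defs.v *)
From HB Require Import structures.
From mathcomp Require Import all_boot all_order all_algebra.
From mathcomp Require Import all_classical all_reals all_analysis.
Set Implicit Arguments. Unset Strict Implicit. Unset Printing Implicit Defensive.
Import Order.TTheory GRing.Theory Num.Theory.
Import numFieldNormedType.Exports.
Local Open Scope ring_scope.

(* Elements of c_0^* = l_1 are modelled as real sequences x : nat -> R whose
   series of absolute values converges. *)
Definition in_l1 (R : realType) (x : nat -> R) : Prop :=
  cvgn (series (fun k => `|x k|)).

Definition l1norm (R : realType) (x : nat -> R) : R :=
  limn (series (fun k => `|x k|)).

Definition l1_continuous_at (R : realType) (g : (nat -> R) -> R) (x : nat -> R)
  : Prop :=
  forall e : R, 0 < e -> exists2 d : R, 0 < d &
    forall y, in_l1 y -> l1norm (fun k => y k - x k) < d -> `|g y - g x| < e.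

(* Hypotheses on g_{nm} (n < m). *)
Definition admissible_g (R : realType) (N : nat -> nat) (n m : nat)
  (g : (nat -> R) -> R) : Prop :=
  [/\ forall x, in_l1 x -> 0 <= g x <= 1,
      forall x, in_l1 x -> (x n != 0) || (x m != 0) -> l1_continuous_at g x,
      forall x, in_l1 x -> (x n != 0) || (x m != 0) ->
        (N m)%:R * `|x n| <= `|x m| -> g x = 0,
      forall x, in_l1 x -> (x n != 0) || (x m != 0) ->
        `|x m| <= ((N m)%:R - 1) * `|x n| -> g x = 1 &
      forall x, in_l1 x -> x != (fun _ => 0) ->
        g x = g (fun k => x k / l1norm x)].

Definition pos_part (R : realType) (r : R) : R := Num.max r 0.

Definition f_n (R : realType) (N : nat -> nat)
  (g : nat -> nat -> (nat -> R) -> R) (n : nat) (x : nat -> R) : R :=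
  pos_part (`|x n| - (N n)%:R * \big[Num.max/0]_(m < n) `|x m|) *
  limn (fun k => \prod_(n.+1 <= m < k) g n m x).

(* Main.v *)
Require Import Defs.
From HB Require Import structures.
From mathcomp Require Import all_boot all_order all_algebra.
From mathcomp Require Import all_classical all_reals all_analysis.
Import Order.TTheory GRing.Theory Num.Theory.
Import numFieldNormedType.Exports.
Local Open Scope ring_scope.

Section Aux.
Set Implicit Arguments. Unset Strict Implicit.
Variable (R : realType) (N : nat -> nat) (g : nat -> nat -> (nat -> R) -> R).
Hypothesis hg : forall n m : nat, (n < m)%N -> admissible_g N n m (g n m).

Lemma g01 n m x : (n < m)%N -> in_l1 x -> 0 <= g n m x <= 1.
Proof. by move=> nm xl; case: (hg nm) => h _ _ _ _; exact: h. Qed.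

Lemma pp_ge0 k n x : in_l1 x -> 0 <= \prod_(n.+1 <= m < k) g n m x.
Proof.
move=> xl; rewrite big_nat; apply: prodr_ge0 => i /andP[hi _].
by case/andP: (g01 hi xl).
Qed.

Lemma pp_noninc n x : in_l1 x ->
  nonincreasing_seq (fun k => \prod_(n.+1 <= m < k) g n m x).
Proof.
move=> xl; apply/nonincreasing_seqP => k.
case: (leqP k n) => hk.
  by rewrite !big_geq // leqW.
rewrite big_nat_recr //=.
have /andP[h0 h1] := g01 hk xl.
by rewrite ler_piMr // pp_ge0.
Qed.

Lemma lim_ge0 n x : in_l1 x -> 0 <= limn (fun k => \prod_(n.+1 <= m < k) g n m x).
Proof.
move=> xl; apply: limr_ge.
  apply/cvg_ex; eexists; apply: nonincreasing_cvgn; first exact: pp_noninc.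
  by exists 0 => _ [k _ <-]; exact: pp_ge0.
by near=> k; exact: pp_ge0.
Unshelve. all: by end_near.
Qed.

Lemma f_ge0 n x : in_l1 x -> 0 <= f_n N g n x.
Proof.
move=> xl; rewrite /f_n; apply: mulr_ge0; last exact: lim_ge0.
by rewrite /pos_part le_max lexx orbT.
Qed.

Lemma f_disj n l x : (n < l)%N -> in_l1 x -> (f_n N g n x = 0) \/ (f_n N g l x = 0).
Proof.
move=> nl xl.
set M := \big[Num.max/0]_(m < l) `|x m|.
case: (leP (`|x l| - (N l)%:R * M) 0) => hp.
  by right; rewrite /f_n /pos_part max_r // mul0r.
left.
have hM : `|x n| <= M.
  rewrite /M (bigD1 (Ordinal nl)) //= le_max lexx //.
have hM0 : 0 <= M.
  by rewrite (le_trans _ hM).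
have hxl : (N l)%:R * M < `|x l| by rewrite -subr_gt0.
have hx : x l != 0.
  by rewrite -normr_gt0 (le_lt_trans _ hxl) // mulr_ge0.
have g0 : g n l x = 0.
  case: (hg nl) => _ _ h _ _; apply: h => //; first by rewrite hx orbT.
  apply: ltW; apply: le_lt_trans hxl; apply: ler_wpM2l => //.
rewrite /f_n; apply/eqP; rewrite mulf_eq0; apply/orP; right; apply/eqP.
apply: cvg_lim => //; apply: cvg_near_cst; near=> k.
have hk : (l < k)%N by near: k; exact: nbhs_infty_gt.
rewrite (big_cat_nat _ (n := l)) //=; last exact: ltnW.
by rewrite (big_ltn (m := l)) // g0 mul0r mulr0.
Unshelve. all: by end_near.
Qed.
End Aux.

Theorem mainTheorem7 (R : realType) (N : nat -> nat)
  (g : nat -> nat -> (nat -> R) -> R) :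
  (forall n m : nat, (n < m)%N -> (N n < N m)%N) ->
  (forall n m : nat, (n < m)%N -> admissible_g N n m (g n m)) ->
  (forall n x, in_l1 x -> 0 <= f_n N g n x) /\
  (forall n l x, n != l -> in_l1 x -> Num.min (f_n N g n x) (f_n N g l x) = 0).
Proof.
move=> _ hg; split; first by move=> n x; exact: f_ge0.
move=> n l x nl xl.
have h0 := f_ge0 hg n xl; have h1 := f_ge0 hg l xl.
case: (ltngtP n l) nl => // hnl _.
  by case: (f_disj hg hnl xl) => ->; [rewrite min_l | rewrite min_r].
by case: (f_disj hg hnl xl) => ->; [rewrite min_r | rewrite min_l].
Qed.
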